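(* If $\mathcal{F}$ is a finitary argumentation framework, then there exists a well-ordering $<$ of $A_{\mathcal{F}}$ such that each argument $a$ attacks only finitely many arguments $b$ with $b<a$.
   Context: An argumentation framework is a pair $\mathcal{F}=(A_{\mathcal{F}},R_{\mathcal{F}})$ with $R_{\mathcal{F}}\subseteq A_{\mathcal{F}}\times A_{\mathcal{F}}$; $a$ attacks $b$ means $(a,b)\in R_{\mathcal{F}}$. $\mathcal{F}$ is finitary if every argument is attacked by only finitely many arguments. *)

(* Defs.v *)
(* An argumentation framework F = (A_F, R_F) is modelled by a
   carrier type [A] (the arguments) and a relation [R : A -> A -> Prop];
   [R a b] means "a attacks b". *)
From Stdlib Require Import List.
Import ListNotations.

Definition finite_set {A : Type} (P : A -> Prop) : Prop :=
  exists l : list A, forall x, P x -> In x l.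

Definition finitary {A : Type} (R : A -> A -> Prop) : Prop :=
  forall b : A, finite_set (fun a => R a b).

Definition well_ordering {A : Type} (lt : A -> A -> Prop) : Prop :=
  (forall x, ~ lt x x) /\
  (forall x y z, lt x y -> lt y z -> lt x z) /\
  (forall x y, lt x y \/ x = y \/ lt y x) /\
  well_founded lt.

(* Main.v *)
Require Import Defs.
From Stdlib Require Import List.
From mathcomp Require ssreflect ssrfun ssrbool eqtype ssrnat seq boolp wochoice.

Module W.
Import ssreflect ssrfun ssrbool eqtype ssrnat seq boolp wochoice.
Lemma WO (A : Type) : exists le0 : A -> A -> Prop,
  (forall P : A -> Prop, (exists x, P x) -> exists z, P z /\ forall x, P x -> le0 z x) /\
  (forall x y, le0 x y -> le0 y x -> x = y).
Proof.
have [R HR] := well_ordering_principle {classic A}.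
exists (fun x y => R x y).
have key : forall P : A -> Prop, (exists x, P x) -> exists! z : {classic A}, minimum_of R (fun x => `[< P x >]) z.
  move=> P [x Px]; apply: HR; exists x; rewrite unfold_in /=; exact/asboolP.
have refl : forall x : {classic A}, R x x.
  move=> x; have [z [[Pz lb] _]] := key (fun t => t = x) (ex_intro _ x erefl).
  move: Pz; rewrite unfold_in /= => /asboolP Hz; subst z.
  apply: lb; rewrite unfold_in /=; exact/asboolP.
split.
- move=> P /key [z [[Pz lb] _]]; exists z; split.
    by move: Pz; rewrite unfold_in /= => /asboolP.
  move=> x Px; apply: lb; rewrite unfold_in /=; exact/asboolP.
- move=> x y Rxy Ryx.
  have [z [[Pz lb] uniq]] := key (fun t => t = x \/ t = y) (ex_intro _ x (or_introl erefl)).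
  have ex : minimum_of R (fun t => `[< t = x \/ t = y >]) x.
    split; first by rewrite unfold_in /=; apply/asboolP; left.
    by move=> t; rewrite unfold_in /= => /asboolP [->|->].
  have ey : minimum_of R (fun t => `[< t = x \/ t = y >]) y.
    split; first by rewrite unfold_in /=; apply/asboolP; right.
    by move=> t; rewrite unfold_in /= => /asboolP [->|->].
  by rewrite -(uniq _ ex) (uniq _ ey).
Qed.
End W.


From Stdlib Require Import Classical IndefiniteDescription Lia Arith.

Section Main.
Variable A : Type.
Variable R : A -> A -> Prop.

Inductive reach (x : A) : nat -> A -> Prop :=
| reach0 : reach x 0 x
| reachS : forall n c c', R c c' -> reach x n c' -> reach x (S n) c.

Lemma fin_incl (P Q : A -> Prop) : finite_set Q -> (forall x, P x -> Q x) -> finite_set P.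
Proof. intros [l Hl] H; exists l; auto. Qed.

Lemma fin_union (P Q : A -> Prop) : finite_set P -> finite_set Q -> finite_set (fun c => P c \/ Q c).
Proof.
  intros [l1 H1] [l2 H2]; exists (l1 ++ l2); intros x [Hx|Hx]; apply in_or_app; auto.
Qed.

Lemma fin_bigunion (P : A -> Prop) (Q : A -> A -> Prop) :
  finite_set P -> (forall y, finite_set (Q y)) -> finite_set (fun c => exists y, P y /\ Q y c).
Proof.
  intros [l Hl] HQ.
  assert (H : finite_set (fun c => exists y, In y l /\ Q y c)).
  { clear Hl. induction l as [|y l IH].
    - exists nil; intros x [y [[] _]].
    - eapply fin_incl. apply (fin_union _ _ (HQ y) IH).
      intros x [y' [[<-|Hin] Hq]]; [left; auto | right; eauto]. }
  eapply fin_incl; [exact H|]. intros x [y [Py Hq]]; eauto.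
Qed.

Lemma layer_fin : finitary R -> forall x n, finite_set (fun c => reach x n c).
Proof.
  intros Hf x n; induction n as [|n IH].
  - exists (x :: nil); intros c Hc; inversion Hc; subst; left; auto.
  - eapply fin_incl. apply (fin_bigunion _ (fun c' c => R c c') IH (fun y => Hf y)).
    intros c Hc; inversion Hc; subst; eauto.
Qed.

Lemma layers_fin : finitary R -> forall x D, finite_set (fun c => exists n, n <= D /\ reach x n c).
Proof.
  intros Hf x D; induction D as [|D IH].
  - eapply fin_incl. apply (layer_fin Hf x 0).
    intros c [n [Hn Hr]]; replace n with 0 in Hr by lia; auto.
  - eapply fin_incl. apply (fin_union _ _ IH (layer_fin Hf x (S D))).
    intros c [n [Hn Hr]]. destruct (Nat.eq_dec n (S D)) as [->|Hne]; [right; auto|left; exists n; split; [lia|auto]].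
Qed.

Lemma nat_least (P : nat -> Prop) : (exists n, P n) -> exists n, P n /\ forall k, P k -> n <= k.
Proof.
  intros [n0 Hn0]. apply NNPP; intros Hno.
  assert (H : forall n, ~ P n).
  { intro n; induction n as [n IH] using lt_wf_ind. intro Pn; apply Hno; exists n; split; auto.
    intros k Pk; destruct (le_lt_dec n k); auto. exfalso; exact (IH k l Pk). }
  exact (H n0 Hn0).
Qed.

Lemma wf_of_min (lt : A -> A -> Prop) :
  (forall P : A -> Prop, (exists x, P x) -> exists z, P z /\ forall y, P y -> ~ lt y z) -> well_founded lt.
Proof.
  intros Hm a. destruct (classic (Acc lt a)) as [H|H]; auto. exfalso.
  destruct (Hm (fun x => ~ Acc lt x) (ex_intro _ a H)) as [z [Hz Hmin]].
  apply Hz; constructor; intros y Hy. destruct (classic (Acc lt y)) as [H'|H']; auto.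
  exfalso; exact (Hmin y H' Hy).
Qed.

End Main.

Theorem lemma1 (A : Type) (R : A -> A -> Prop) :
  finitary R ->
  exists lt : A -> A -> Prop,
    well_ordering lt /\
    forall a : A, finite_set (fun b => R a b /\ lt b a).
Proof.
  intros Hfin.
  destruct (W.WO A) as [le0 [Hmin Hanti]].
  assert (Hrefl : forall x, le0 x x).
  { intro x; destruct (Hmin (fun t => t = x) (ex_intro _ x eq_refl)) as [z [-> H]]; auto. }
  assert (Htot : forall x y, le0 x y \/ le0 y x).
  { intros x y; destruct (Hmin (fun t => t = x \/ t = y) (ex_intro _ x (or_introl eq_refl))) as [z [[->| ->] H]]; auto. }
  assert (Htrans : forall x y z, le0 x y -> le0 y z -> le0 x z).
  { intros x y z Hxy Hyz.
    destruct (Hmin (fun t => t = x \/ t = y \/ t = z) (ex_intro _ x (or_introl eq_refl))) as [w [Hw H]].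
    destruct Hw as [->|[->| ->]].
    - apply H; auto.
    - assert (x = y) by (apply Hanti; auto). subst; auto.
    - assert (y = z) by (apply Hanti; auto). subst; auto. }
  set (Q a x := exists n, @reach A R x n a).
  assert (Hm : forall a, exists z, Q a z /\ forall x, Q a x -> le0 z x).
  { intro a; apply Hmin; exists a, 0; constructor. }
  destruct (functional_choice _ Hm) as [m Hm'].
  assert (Hd : forall a, exists n, @reach A R (m a) n a /\ forall k, @reach A R (m a) k a -> n <= k).
  { intro a; apply nat_least. apply (Hm' a). }
  destruct (functional_choice _ Hd) as [d Hd'].
  set (lt0 x y := le0 x y /\ x <> y).
  assert (lt0_irr : forall x, ~ lt0 x x) by (intros x [_ H]; auto).
  assert (lt0_trans : forall x y z, lt0 x y -> lt0 y z -> lt0 x z).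
  { intros x y z [H1 H2] [H3 H4]; split; [eauto|].
    intros ->. apply H4; apply Hanti; auto. }
  assert (lt0_tri : forall x y, lt0 x y \/ x = y \/ lt0 y x).
  { intros x y; destruct (classic (x = y)) as [e|ne]; auto.
    destruct (Htot x y); [left|right; right]; split; auto. }
  assert (lt0_le : forall x y, lt0 x y -> le0 y x -> False).
  { intros x y [H1 H2] H3; apply H2, Hanti; auto. }
  exists (fun b a => lt0 (m b) (m a) \/ (m b = m a /\ (d b < d a \/ (d b = d a /\ lt0 b a)))).
  split; [split; [|split; [|split]]|].
  - intros x [H|[_ [H|[_ H]]]]; [eapply lt0_irr; eauto|lia|eapply lt0_irr; eauto].
  - intros x y z [H1|[E1 [H1|[F1 H1]]]] [H2|[E2 [H2|[F2 H2]]]];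
      try (left; eauto; fail); try (left; rewrite ?E1, ?E2 in *; auto; fail);
      right; split; try congruence; try (left; lia).
    right; split; [congruence|eauto].
  - intros x y. destruct (lt0_tri (m x) (m y)) as [H|[E|H]]; auto.
    destruct (lt_eq_lt_dec (d x) (d y)) as [[H|E']|H].
    + left; right; auto.
    + destruct (lt0_tri x y) as [H|[E''|H]]; auto.
      * left; right; auto.
      * right; right; right; split; auto.
    + right; right; right; auto.
  - apply wf_of_min. intros P HP.
    destruct (Hmin (fun x => exists c, P c /\ m c = x)) as [x0 [[c1 [Pc1 Ec1]] Hx0]].
    { destruct HP as [c Pc]; eauto. }
    destruct (nat_least (fun n => exists c, P c /\ m c = x0 /\ d c = n)) as [n0 [[c2 [Pc2 [Ec2 Fc2]]] Hn0]].
    { eauto. }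
    destruct (Hmin (fun c => P c /\ m c = x0 /\ d c = n0)) as [c0 [[Pc0 [Ec0 Fc0]] Hc0]].
    { eauto. }
    exists c0; split; auto. intros y Py [H|[E [H|[F H]]]].
    + rewrite Ec0 in H. apply (lt0_le _ _ H). apply Hx0; eauto.
    + assert (n0 <= d y) by (apply Hn0; exists y; rewrite Ec0 in E; auto). lia.
    + apply (lt0_le _ _ H). apply Hc0. split; auto; split; congruence.
  - intro a. eapply fin_incl. apply (@layers_fin A R Hfin (m a) (d a)).
    intros b [Hab Hlt].
    assert (Hrb : @reach A R (m b) (d b) b) by apply (Hd' b).
    assert (Hle : le0 (m a) (m b)) by (apply (Hm' a); exists (S (d b)); econstructor; eauto).
    destruct Hlt as [H|[E [H|[F H]]]].
    + exfalso; eapply lt0_le; eauto.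
    + exists (d b); split; [lia|]; rewrite <- E; auto.
    + exists (d b); split; [lia|]; rewrite <- E; auto.
Qed.
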